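(* Let $\Sigma^2\subset\mathbb{R}^2$ be open and let $\psi=(x,\phi):\Sigma^2\to\mathbb{R}^2\times\mathbb{R}$ be an indefinite improper affine sphere with Blaschke normal $\xi=(0,0,1)$, where $x:\Sigma^2\to\mathbb{R}^2$, $\phi:\Sigma^2\to\mathbb{R}$; write its conormal map as $\nu=(n,1)$ with $n:\Sigma^2\to\mathbb{R}^2$. Define $\tilde L_\psi:\Sigma^2\to\widetilde{\mathbb{C}}^2$ by $\tilde L_\psi:=x+jn$, and identify $\widetilde{\mathbb{C}}^2$ with $\mathbb{R}^4$ via $(z_1,z_2)=(y_0+jy_1,\,y_2+jy_3)\leftrightarrow(y_0,y_1,y_2,y_3)$. Then \[ \tilde L_\psi^*(dy_0\wedge dy_1+dy_2\wedge dy_3)=0\quad\text{and}\quad \tilde L_\psi^*(dy_0\wedge dy_2+dy_1\wedge dy_3)=0 . \]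
   Context: Para-complex numbers: $\widetilde{\mathbb{C}}=\{a+jb: a,b\in\mathbb{R}\}$ with $j^2=1$. An improper affine sphere is an immersion $\psi$ into affine $3$-space whose Blaschke (affine) normal $\xi$ has vanishing shape operator (hence is constant; here normalized to $\xi=(0,0,1)$); it is indefinite if its affine metric is indefinite. The conormal map $\nu$ is the map into $(\mathbb{R}^3)^*\cong\mathbb{R}^3$ with $\nu(d\psi)=0$ and $\nu(\xi)=1$, so $\nu=(n,1)$ for some $n:\Sigma^2\to\mathbb{R}^2$; the affine metric equals $-\langle dx,dn\rangle$. *)

(* Defs.v *)
From Stdlib Require Import Reals.
From Coquelicot Require Import Coquelicot.
Open Scope R_scope.

Definition pt := (R * R)%type.

Definition pu (f : pt -> R) (p : pt) : R := Derive (fun t => f (t, snd p)) (fst p).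
Definition pv (f : pt -> R) (p : pt) : R := Derive (fun t => f (fst p, t)) (snd p).
Definition pd (i : nat) (f : pt -> R) : pt -> R :=
  match i with O => pu f | _ => pv f end.

Fixpoint Ck (k : nat) (Dom : pt -> Prop) (f : pt -> R) : Prop :=
  match k with
  | O => forall p, Dom p -> continuous f p
  | Datatypes.S k' =>
      (forall p, Dom p -> continuous f p /\
         ex_derive (fun t => f (t, snd p)) (fst p) /\
         ex_derive (fun t => f (fst p, t)) (snd p))
      /\ Ck k' Dom (pu f) /\ Ck k' Dom (pv f)
  end.

Definition smooth_on (Dom : pt -> Prop) (f : pt -> R) : Prop := forall k, Ck k Dom f.

(** Vectors of R^3 (and covectors of (R^3)^* ≅ R^3). *)
Definition vec3 := (R * R * R)%type.
Definition comp (c : nat) (w : vec3) : R :=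
  match c with O => fst (fst w) | 1%nat => snd (fst w) | _ => snd w end.
Definition det3 (a b c : vec3) : R :=
  comp 0 a * (comp 1 b * comp 2 c - comp 2 b * comp 1 c)
  - comp 1 a * (comp 0 b * comp 2 c - comp 2 b * comp 0 c)
  + comp 2 a * (comp 0 b * comp 1 c - comp 1 b * comp 0 c).
Definition dot3 (a b : vec3) : R :=
  comp 0 a * comp 0 b + comp 1 a * comp 1 b + comp 2 a * comp 2 b.

Definition dvec (i : nat) (F : pt -> vec3) (p : pt) : vec3 :=
  (pd i (fun q => comp 0 (F q)) p, pd i (fun q => comp 1 (F q)) p,
   pd i (fun q => comp 2 (F q)) p).

(** Volume element theta(X,Y) = det(psi_* X, psi_* Y, xi) on the frame (d_u, d_v). *)
Definition theta (psi xi : pt -> vec3) (p : pt) : R :=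
  det3 (dvec 0 psi p) (dvec 1 psi p) (xi p).

Definition transversal (Dom : pt -> Prop) (psi xi : pt -> vec3) : Prop :=
  forall p, Dom p -> theta psi xi p <> 0.

(** Gauss formula  D_{d_i} psi_* d_j = psi_*(nabla_{d_i} d_j) + h(d_i,d_j) xi :
    h i j is the affine fundamental form (affine metric) induced by xi. *)
Definition gauss_formula (Dom : pt -> Prop) (psi xi : pt -> vec3)
    (h : nat -> nat -> pt -> R) : Prop :=
  forall p, Dom p -> forall i j, (i < 2)%nat -> (j < 2)%nat ->
    exists g0 g1, forall c, (c < 3)%nat ->
      pd i (pd j (fun q => comp c (psi q))) p =
      g0 * pd 0 (fun q => comp c (psi q)) p + g1 * pd 1 (fun q => comp c (psi q)) p
      + h i j p * comp c (xi p).

Definition det2 (h : nat -> nat -> pt -> R) (p : pt) : R :=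
  h 0%nat 0%nat p * h 1%nat 1%nat p - h 0%nat 1%nat p * h 1%nat 0%nat p.

(** Weingarten formula D_X xi = - psi_*(S X) + tau(X) xi with tau = 0,
    i.e. D xi is tangent. *)
Definition tau_zero (Dom : pt -> Prop) (psi xi : pt -> vec3) : Prop :=
  forall p, Dom p -> forall i, (i < 2)%nat ->
    exists s0 s1, forall c, (c < 3)%nat ->
      pd i (fun q => comp c (xi q)) p =
      s0 * pd 0 (fun q => comp c (psi q)) p + s1 * pd 1 (fun q => comp c (psi q)) p.

(** Blaschke (affine) normal: transversal, tau = 0 (nabla theta = 0), and the
    volume condition theta = omega_h, i.e. |det h(d_i,d_j)| = theta(d_u,d_v)^2. *)
Definition is_blaschke_normal (Dom : pt -> Prop) (psi xi : pt -> vec3) : Prop :=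
  transversal Dom psi xi /\ tau_zero Dom psi xi /\
  (forall h, gauss_formula Dom psi xi h ->
     forall p, Dom p -> Rabs (det2 h p) = (theta psi xi p) ^ 2).

(** Improper: the shape operator vanishes (together with tau = 0: D xi = 0). *)
Definition shape_operator_zero (Dom : pt -> Prop) (xi : pt -> vec3) : Prop :=
  forall p, Dom p -> forall i c, (i < 2)%nat -> (c < 3)%nat ->
    pd i (fun q => comp c (xi q)) p = 0.

(** Indefinite: the affine metric is indefinite (det < 0 in dimension 2). *)
Definition indefinite (Dom : pt -> Prop) (psi xi : pt -> vec3) : Prop :=
  forall h, gauss_formula Dom psi xi h -> forall p, Dom p -> det2 h p < 0.

Definition is_conormal (Dom : pt -> Prop) (psi xi nu : pt -> vec3) : Prop :=
  forall p, Dom p ->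
    dot3 (nu p) (dvec 0 psi p) = 0 /\ dot3 (nu p) (dvec 1 psi p) = 0 /\
    dot3 (nu p) (xi p) = 1.

(** Para-complex numbers a + j b, j^2 = 1. *)
Record paraC := PC { pc_re : R ; pc_im : R }.
Definition pc_mul (z w : paraC) : paraC :=
  PC (pc_re z * pc_re w + pc_im z * pc_im w) (pc_re z * pc_im w + pc_im z * pc_re w).

Definition Ltilde (x n : pt -> R * R) (p : pt) : paraC * paraC :=
  (PC (fst (x p)) (fst (n p)), PC (snd (x p)) (snd (n p))).

Definition ycoord (a : nat) (z : paraC * paraC) : R :=
  match a with
  | O => pc_re (fst z) | 1%nat => pc_im (fst z)
  | 2%nat => pc_re (snd z) | _ => pc_im (snd z)
  end.

(** Coefficient of du ∧ dv in F^*(dy_a ∧ dy_b). *)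
Definition pullback_wedge (F : pt -> paraC * paraC) (a b : nat) (p : pt) : R :=
  pu (fun q => ycoord a (F q)) p * pv (fun q => ycoord b (F q)) p
  - pv (fun q => ycoord a (F q)) p * pu (fun q => ycoord b (F q)) p.

(* Main.v *)
Require Import Defs.
From Stdlib Require Import Reals Lra Lia.
From Coquelicot Require Import Coquelicot.
Open Scope R_scope.

Lemma D4 (A1 A2 B1 B2 : R -> R) t : ex_derive A1 t -> ex_derive A2 t ->
  ex_derive B1 t -> ex_derive B2 t ->
  Derive (fun s => -(A1 s * B1 s + A2 s * B2 s)) t =
  -(Derive A1 t * B1 t + A1 t * Derive B1 t + (Derive A2 t * B2 t + A2 t * Derive B2 t)).
Proof. intros. apply is_derive_unique. auto_derive. repeat split; auto. rewrite !Rmult_1_l. reflexivity. Qed.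

Lemma smooth_pd D f i : smooth_on D f -> smooth_on D (pd i f).
Proof. intros H k. destruct i; simpl; apply (H (S k)). Qed.

Lemma smooth_ex D f q : smooth_on D f -> D q ->
  ex_derive (fun t => f (t, snd q)) (fst q) /\ ex_derive (fun t => f (fst q, t)) (snd q).
Proof. intros H Hq. destruct (H 1%nat) as [H1 _]. apply H1; auto. Qed.

Lemma smooth_cont D f q : smooth_on D f -> D q -> continuous f q.
Proof. intros H Hq. apply (H 0%nat); auto. Qed.

Lemma open_line_u (D : pt -> Prop) a b : open D -> D (a,b) -> locally a (fun t => D (t,b)).
Proof. intros Ho Hp. apply (locally_2d_1d_const_y (fun u v => D (u,v))).
  apply locally_2d_locally. eapply filter_imp; [|apply Ho; exact Hp].
  intros [u v] H; exact H. Qed.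
Lemma open_line_v (D : pt -> Prop) a b : open D -> D (a,b) -> locally b (fun t => D (a,t)).
Proof. intros Ho Hp. apply (locally_2d_1d_const_x (fun u v => D (u,v))).
  apply locally_2d_locally. eapply filter_imp; [|apply Ho; exact Hp].
  intros [u v] H; exact H. Qed.

Lemma pd_dot D i g a1 a2 b1 b2 p : open D -> D p ->
  smooth_on D a1 -> smooth_on D a2 -> smooth_on D b1 -> smooth_on D b2 ->
  (forall q, D q -> g q = -(a1 q * b1 q + a2 q * b2 q)) ->
  pd i g p = -(pd i a1 p * b1 p + a1 p * pd i b1 p + (pd i a2 p * b2 p + a2 p * pd i b2 p)).
Proof.
  intros Ho Hp S1 S2 S3 S4 Hg. destruct p as [a b].
  destruct (smooth_ex _ _ _ S1 Hp); destruct (smooth_ex _ _ _ S2 Hp);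
  destruct (smooth_ex _ _ _ S3 Hp); destruct (smooth_ex _ _ _ S4 Hp); simpl in *.
  destruct i; simpl; unfold pu, pv; simpl.
  - rewrite (Derive_ext_loc _ (fun t => -(a1 (t,b) * b1 (t,b) + a2 (t,b) * b2 (t,b)))).
    + apply (D4 (fun t => a1 (t,b)) (fun t => a2 (t,b)) (fun t => b1 (t,b)) (fun t => b2 (t,b))); auto.
    + eapply filter_imp; [|apply (open_line_u D a b Ho Hp)]. intros t Ht; apply Hg; auto.
  - rewrite (Derive_ext_loc _ (fun t => -(a1 (a,t) * b1 (a,t) + a2 (a,t) * b2 (a,t)))).
    + apply (D4 (fun t => a1 (a,t)) (fun t => a2 (a,t)) (fun t => b1 (a,t)) (fun t => b2 (a,t))); auto.
    + eapply filter_imp; [|apply (open_line_v D a b Ho Hp)]. intros t Ht; apply Hg; auto.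
Qed.

Lemma cont2d (g : pt -> R) q : continuous g q ->
  continuity_2d_pt (fun u v => g (u,v)) (fst q) (snd q).
Proof.
  intros Hc eps. apply locally_2d_locally. destruct q as [a b]; simpl.
  specialize (Hc (ball (g (a,b)) eps) (locally_ball _ eps)).
  eapply filter_imp; [|exact Hc]. intros [u v] H. exact H.
Qed.

Lemma schwarz_pt D f p : open D -> smooth_on D f -> D p ->
  pu (pv f) p = pv (pu f) p.
Proof.
  intros Ho Hs Hp. destruct p as [a b].
  unfold pu, pv; simpl.
  apply (Schwarz (fun u v => f (u,v)) a b).
  - apply locally_2d_locally. eapply filter_imp; [|apply Ho; exact Hp].
    intros [u v] Hz; simpl.
    destruct (smooth_ex _ _ _ Hs Hz) as [E1 E2].
    destruct (smooth_ex _ _ _ (smooth_pd _ _ 1 Hs) Hz) as [E3 _].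
    destruct (smooth_ex _ _ _ (smooth_pd _ _ 0 Hs) Hz) as [_ E4].
    simpl in *. auto.
  - apply (cont2d (pu (pv f)) (a,b)).
    apply (smooth_cont D); auto. apply (smooth_pd D _ 0), (smooth_pd D _ 1), Hs.
  - apply (cont2d (pv (pu f)) (a,b)).
    apply (smooth_cont D); auto. apply (smooth_pd D _ 1), (smooth_pd D _ 0), Hs.
Qed.

Theorem mainTheorem2 (Sigma : pt -> Prop) (x : pt -> R * R) (phi : pt -> R)
    (n : pt -> R * R) :
  open Sigma ->
  smooth_on Sigma (fun p => fst (x p)) ->
  smooth_on Sigma (fun p => snd (x p)) ->
  smooth_on Sigma phi ->
  let psi : pt -> vec3 := fun p => (fst (x p), snd (x p), phi p) in
  let xi : pt -> vec3 := fun _ => (0, 0, 1) in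
  is_blaschke_normal Sigma psi xi ->
  shape_operator_zero Sigma xi ->
  indefinite Sigma psi xi ->
  smooth_on Sigma (fun p => fst (n p)) ->
  smooth_on Sigma (fun p => snd (n p)) ->
  is_conormal Sigma psi xi (fun p => (fst (n p), snd (n p), 1)) ->
  forall p, Sigma p ->
    pullback_wedge (Ltilde x n) 0 1 p + pullback_wedge (Ltilde x n) 2 3 p = 0 /\
    pullback_wedge (Ltilde x n) 0 2 p + pullback_wedge (Ltilde x n) 1 3 p = 0.
Proof.
  intros Ho SX1 SX2 SP psi xi [Htr [_ Hbl]] _ Hind SN1 SN2 Hcon p Hp.
  set (X1 := fun p => fst (x p)) in *.
  set (X2 := fun p => snd (x p)) in *.
  set (N1 := fun p => fst (n p)) in *.
  set (N2 := fun p => snd (n p)) in *.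
  assert (Hphi : forall j, (j < 2)%nat -> forall q, Sigma q ->
     pd j phi q = -(N1 q * pd j X1 q + N2 q * pd j X2 q)).
  { intros j Hj q Hq. destruct (Hcon q Hq) as [C0 [C1 _]].
    unfold dot3, dvec in *; simpl in *.
    destruct j as [|[|j]]; [| |lia]; simpl; unfold X1, X2, N1, N2; change (fun q0 : pt => phi q0) with phi in *; lra. }
  assert (Hdd : forall i j, (i < 2)%nat -> (j < 2)%nat ->
     pd i (pd j phi) p = -(pd i N1 p * pd j X1 p + N1 p * pd i (pd j X1) p
                          + (pd i N2 p * pd j X2 p + N2 p * pd i (pd j X2) p))).
  { intros i j Hi Hj. apply (pd_dot Sigma); auto using smooth_pd. }
  assert (Dx : forall q, Sigma q -> pu X1 q * pv X2 q - pv X1 q * pu X2 q <> 0).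
  { intros q Hq H. apply (Htr q Hq).
    assert (E: theta psi xi q = pu X1 q * pv X2 q - pv X1 q * pu X2 q)
      by (unfold theta, det3, dvec, X1, X2; simpl; ring).
    rewrite E; exact H. }
  assert (S1 : pu (pv X1) p = pv (pu X1) p) by (apply (schwarz_pt Sigma); auto).
  assert (S2 : pu (pv X2) p = pv (pu X2) p) by (apply (schwarz_pt Sigma); auto).
  assert (S3 : pu (pv phi) p = pv (pu phi) p) by (apply (schwarz_pt Sigma); auto).
  pose proof (Hdd 0%nat 1%nat ltac:(lia) ltac:(lia)) as H01.
  pose proof (Hdd 1%nat 0%nat ltac:(lia) ltac:(lia)) as H10.
  simpl in H01, H10.
  split.
  { unfold pullback_wedge, Ltilde, ycoord; simpl. unfold X1, X2, N1, N2 in *. rewrite S1, S2, S3 in H01. lra. }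
  pose (Dq q := pu X1 q * pv X2 q - pv X1 q * pu X2 q).
  pose (G0 i j q := (pd i (pd j X1) q * pv X2 q - pd i (pd j X2) q * pv X1 q) / Dq q).
  pose (G1 i j q := (pu X1 q * pd i (pd j X2) q - pu X2 q * pd i (pd j X1) q) / Dq q).
  pose (h i j q := pd i (pd j phi) q - G0 i j q * pu phi q - G1 i j q * pv phi q).
  assert (Hg : gauss_formula Sigma psi xi h).
  { intros q Hq i j Hi Hj. exists (G0 i j q), (G1 i j q). intros c Hc.
    pose proof (Dx q Hq) as Dxq.
    destruct c as [|[|[|c]]]; try lia; unfold psi, xi; simpl.
    - unfold G0, G1, Dq in *. fold X1 X2. field. exact Dxq.
    - unfold G0, G1, Dq in *. fold X1 X2. field. exact Dxq.
    - change (fun q0 : pt => phi q0) with phi. unfold h. ring. }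
  assert (Hh : forall i j, (i < 2)%nat -> (j < 2)%nat ->
     h i j p = -(pd i N1 p * pd j X1 p + pd i N2 p * pd j X2 p)).
  { intros i j Hi Hj. unfold h, G0, G1. rewrite (Hdd i j Hi Hj).
    pose proof (Hphi 0%nat ltac:(lia) p Hp) as P0. pose proof (Hphi 1%nat ltac:(lia) p Hp) as P1.
    simpl in P0, P1. rewrite P0, P1.
    unfold Dq. simpl. field. apply Dx; auto. }
  pose proof (Hind h Hg p Hp) as Hneg.
  pose proof (Hbl h Hg p Hp) as Habs.
  assert (E: theta psi xi p = pu X1 p * pv X2 p - pv X1 p * pu X2 p)
      by (unfold theta, det3, dvec, X1, X2; simpl; ring).
  unfold det2 in Hneg, Habs.
  rewrite (Hh 0%nat 0%nat), (Hh 0%nat 1%nat), (Hh 1%nat 0%nat), (Hh 1%nat 1%nat) in Hneg, Habs by lia.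
  rewrite E in Habs. simpl in Hneg, Habs.
  rewrite Rabs_left in Habs by exact Hneg.
  pose proof (Dx p Hp) as Dxp.
  unfold pullback_wedge, Ltilde, ycoord; simpl.
  unfold X1, X2, N1, N2 in *.
  apply (Rmult_eq_reg_l (pu (fun p0 : pt => fst (x p0)) p * pv (fun p0 : pt => snd (x p0)) p -
     pv (fun p0 : pt => fst (x p0)) p * pu (fun p0 : pt => snd (x p0)) p)); [|exact Dxp].
  nra.
Qed.
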